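(* Let $a,b,c,d,e,f\in\mathbb{C}$ with $|a|=|b|=|c|=|d|=|e|=|f|=1$, and set \[\mathcal{H}(a,b,c,d,e,f):=(1+a+b+e)(1+\overline{c}+\overline{d}+\overline{f})(1+c\overline{a}+d\overline{b}+f\overline{e}).\] Then there exist complex numbers $s_1,s_2,s_3,s_4$ of modulus $1$ such that the three vectors $(1,1,1,1,1,1)$, $(1,a,b,e,s_1,s_2)$ and $(1,c,d,f,s_3,s_4)$ of $\mathbb{C}^6$ are pairwise orthogonal (with respect to the standard inner product $\langle u,v\rangle=\sum_k u_k\overline{v_k}$) if and only if both \[\mathcal{H}(a,b,c,d,e,f)=4-|1+a+b+e|^2-|1+c+d+f|^2-|1+c\overline{a}+d\overline{b}+f\overline{e}|^2\] and \[|1+a+b+e|\leq 2\] hold. *)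

(* Defs.v *)
(* Complex numbers are modelled by an arbitrary
   numClosedFieldType C (algebraically closed field with conjugation and
   norm, e.g. algC); the statement is proved for every such C. *)
From HB Require Import structures.
From mathcomp Require Import all_boot all_order all_algebra.
Set Implicit Arguments. Unset Strict Implicit. Unset Printing Implicit Defensive.
Import Order.TTheory GRing.Theory Num.Theory.
Local Open Scope ring_scope.

Definition cdot (C : numClosedFieldType) (n : nat) (u v : 'rV[C]_n) : C :=
  \sum_(k < n) u 0 k * (v 0 k)^*.

Definition vec6 (C : numClosedFieldType) (x0 x1 x2 x3 x4 x5 : C) : 'rV[C]_6 :=
  \row_(k < 6) nth 0 [:: x0; x1; x2; x3; x4; x5] k.

Definition calH (C : numClosedFieldType) (a b c d e f : C) : C :=
  (1 + a + b + e) * (1 + c^* + d^* + f^*) * (1 + c * a^* + d * b^* + f * e^*).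

(* Main.v *)
Require Import Defs.
From HB Require Import structures.
From mathcomp Require Import all_boot all_order all_algebra.
From mathcomp Require Import ring.
Import Order.TTheory GRing.Theory Num.Theory.
Local Open Scope ring_scope.


Lemma cdot6 (C : numClosedFieldType) (x0 x1 x2 x3 x4 x5 y0 y1 y2 y3 y4 y5 : C) :
  cdot (vec6 x0 x1 x2 x3 x4 x5) (vec6 y0 y1 y2 y3 y4 y5) =
  x0 * y0^* + x1 * y1^* + x2 * y2^* + x3 * y3^* + x4 * y4^* + x5 * y5^*.
Proof.
rewrite /cdot /vec6 !big_ord_recr big_ord0 !mxE /= add0r //.
Qed.

Lemma unitE (C : numClosedFieldType) (x : C) : `|x| = 1 <-> x * x^* = 1.
Proof.
split=> H; first by rewrite -normCK H expr1n.
by apply/eqP; rewrite -sqrp_eq1 ?normr_ge0 // normCK H.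
Qed.

Lemma conj_unit {C : numClosedFieldType} {x : C} : x * x^* = 1 -> x^* = x^-1.
Proof.
move=> H; have xnz : x != 0 by apply: contra_eq_neq H => ->; rewrite mul0r eq_sym oner_eq0.
by rewrite -[x^*]mul1r -(mulVf xnz) -mulrA H mulr1.
Qed.

Lemma fwd (C : numClosedFieldType) (s1 s2 s3 s4 : C) :
  s1 * s1^* = 1 -> s2 * s2^* = 1 -> s3 * s3^* = 1 -> s4 * s4^* = 1 ->
  let P := s1 + s2 in let Q := s3 + s4 in let R := s1^* * s3 + s2^* * s4 in
  P * Q^* * R = P * P^* + Q * Q^* + R * R^* - 4.
Proof.
move=> h1 h2 h3 h4 P Q R; rewrite /P /Q /R.
have nz : forall x : C, x * x^* = 1 -> x != 0.
  by move=> x H; apply: contra_eq_neq H => ->; rewrite mul0r eq_sym oner_eq0.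
have n1 := nz _ h1; have n2 := nz _ h2; have n3 := nz _ h3; have n4 := nz _ h4.
rewrite !rmorphD !rmorphM /= ?conjCK (conj_unit h1) (conj_unit h2) (conj_unit h3) (conj_unit h4).
field.
by rewrite n1 n2 n3 n4.
Qed.



Lemma split_unit (C : numClosedFieldType) (P W K : C) :
  P * P^* <= 4 -> W * P = K -> K^* = K ->
  exists g : C, [/\ g * g^* = 1, P^* * g + P * g^* = P * P^*,
     W * g + W^* * g^* = K & (P * P^* != 4 -> 2 * g != P)].
Proof.
move=> hP hWK hK.
have hWK' : W^* * P^* = K by rewrite -rmorphM /= hWK hK.
have two0 : (2 : C) != 0 by rewrite pnatr_eq0.
have four0 : (4 : C) != 0 by rewrite pnatr_eq0.
have [P0|Pn0] := eqVneq P 0.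
  have K0 : K = 0 by rewrite -hWK P0 mulr0.
  have [W0|Wn0] := eqVneq W 0.
    exists 1; split; rewrite ?P0 ?W0 ?K0 ?rmorph1 ?rmorph0; try ring.
    by move=> _; rewrite mulr1.
  set n := `|W|.
  have nn0 : n != 0 by rewrite normr_eq0.
  have nc : n^* = n by rewrite conj_Creal // normr_real.
  have n2 : n ^+ 2 = W * W^* by rewrite normCK.
  exists ('i * W^* / n); split.
  - rewrite !rmorphM fmorphV /= conjCK conjCi nc.
    have -> : 'i * W^* / n * (- 'i * W / n) = - ('i ^+ 2) * (W * W^*) / n ^+ 2 by field.
    by rewrite sqrCi -n2 opprK mul1r divff // expf_neq0.
  - by rewrite P0 rmorph0; ring.
  - rewrite !rmorphM fmorphV /= conjCK conjCi nc K0.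
    have -> : W * ('i * W^* / n) + W^* * (- 'i * W / n) = 0 by field.
    done.
  - by move=> _; rewrite P0 mulf_neq0 // ?neq0CiE ?mulf_neq0 ?invr_eq0 ?conjC_eq0 // neq0Ci.
set x := (4 - P * P^*) / (4 * (P * P^*)).
have PP0 : P * P^* != 0 by rewrite mulf_neq0 ?conjC_eq0.
have x0 : 0 <= x.
  rewrite /x divr_ge0 ?subr_ge0 // mulr_ge0 ?ler0n // -normCK exprn_ge0 //.
set t := sqrtC x.
have tc : t^* = t by rewrite conj_Creal // sqrtC_real.
have t2 : t ^+ 2 = x by rewrite sqrtCK.
have gc : (P / 2 + 'i * t * P)^* = P^* / 2 - 'i * t * P^*.
  by rewrite rmorphD !rmorphM fmorphV /= conjCi tc rmorph_nat; ring.
clearbody t.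
exists (P / 2 + 'i * t * P); rewrite gc; split.
- have -> : (P / 2 + 'i * t * P) * (P^* / 2 - 'i * t * P^*) =
     P * P^* / 4 - 'i ^+ 2 * t ^+ 2 * (P * P^*) by field.
  by rewrite sqrCi t2 /x; field; rewrite conjC_eq0 Pn0.
- by field.
- have -> : W * (P / 2 + 'i * t * P) + W^* * (P^* / 2 - 'i * t * P^*) =
     (W * P) / 2 + (W^* * P^*) / 2 + 'i * t * (W * P - W^* * P^*) by field.
  by rewrite hWK hWK' subrr mulr0 addr0; field.
- move=> h4; apply/eqP => heq.
  have : 'i * t * P = 0.
    apply: (mulfI two0); rewrite mulr0.
    have -> : 2 * ('i * t * P) = 2 * (P / 2 + 'i * t * P) - P by field.
    by rewrite heq subrr.
  move/eqP; rewrite !mulf_eq0 (negPf Pn0) orbF => /orP[]; first by rewrite (negPf (neq0Ci _)).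
  move=> /eqP t0; move: t2; rewrite t0 expr0n /= => /esym/eqP.
  rewrite /x mulf_eq0 invr_eq0 (negPf (mulf_neq0 four0 PP0)) orbF subr_eq0 eq_sym.
  by rewrite (negPf h4).
Qed.



Lemma deg (C : numClosedFieldType) (P Q R : C) :
  P * Q^* * R = P * P^* + Q * Q^* + R * R^* - 4 -> P * P^* = 4 -> R = P^* * Q / 2.
Proof.
move=> h1 hP.
have h2 : P^* * Q * R^* = P * P^* + Q * Q^* + R * R^* - 4.
  have := congr1 Num.conj_op h1.
  rewrite !rmorphB !rmorphD !rmorphM /= !conjCK ?rmorph1 ?rmorph_nat => ->; ring.
set K := P * P^* + Q * Q^* + R * R^* - 4 in h1 h2.
have E : (P^* * Q / 2 - R) * (P^* * Q / 2 - R)^* =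
   (Q * Q^* / 4 - 1) * (P * P^* - 4) - (P * Q^* * R - K) / 2 - (P^* * Q * R^* - K) / 2.
  by rewrite rmorphB !rmorphM fmorphV /= conjCK ?rmorph_nat ?rmorph1 /K; field.
move: E; rewrite h1 h2 hP !subrr !(mulr0, mul0r, subr0, sub0r, oppr0) => /eqP.
rewrite mulf_eq0 conjC_eq0 orbb subr_eq0 => /eqP ->//.
Qed.



Lemma core (C : numClosedFieldType) (P Q R : C) :
  P * Q^* * R = P * P^* + Q * Q^* + R * R^* - 4 -> P * P^* <= 4 ->
  (P * P^* = 4 -> Q * Q^* <= 4) ->
  exists s1 s2 s3 s4 : C,
   [/\ s1 * s1^* = 1, s2 * s2^* = 1, s3 * s3^* = 1 & s4 * s4^* = 1] /\
   [/\ s1 + s2 = P, s3 + s4 = Q & s1^* * s3 + s2^* * s4 = R].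
Proof.
move=> h1 hP hQ.
have h2 : P^* * Q * R^* = P * P^* + Q * Q^* + R * R^* - 4.
  have := congr1 Num.conj_op h1.
  rewrite !rmorphB !rmorphD !rmorphM /= !conjCK ?rmorph1 ?rmorph_nat => ->; ring.
have [P4|P4] := eqVneq (P * P^*) 4.
  have hR := @deg C P Q R h1 P4.
  have [g [g1 g2 _ _]] := @split_unit C Q 0 0 (hQ P4) (mul0r _) (rmorph0 _).
  exists (P / 2), (P / 2), g, (Q - g); split; split.
  - have -> : (P / 2) * (P / 2)^* = (P * P^*) / 4.
      by rewrite !rmorphM fmorphV /= ?rmorph_nat ?rmorph1; field.
    by rewrite P4 divff // pnatr_eq0.
  - have -> : (P / 2) * (P / 2)^* = (P * P^*) / 4.
      by rewrite !rmorphM fmorphV /= ?rmorph_nat ?rmorph1; field.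
    by rewrite P4 divff // pnatr_eq0.
  - exact: g1.
  - have -> : (Q - g) * (Q - g)^* = Q * Q^* - (Q^* * g + Q * g^*) + g * g^*.
      by rewrite rmorphB /=; ring.
    by rewrite g1 g2; ring.
  - by field.
  - by ring.
  - by rewrite hR !rmorphM fmorphV /= ?rmorph_nat ?rmorph1; field.
have [K hKdef] : exists K, K = P * P^* + Q * Q^* + R * R^* - 4 by eexists.
rewrite -hKdef in h1 h2.
have hK : K^* = K.
  rewrite hKdef !rmorphB !rmorphD !rmorphM /= !conjCK ?rmorph1 ?rmorph_nat; ring.
have hWK : (Q^* * R) * P = K by rewrite -h1; ring.
have [g [g1 g2 g3 g4]] := @split_unit C P (Q^* * R) K hP hWK hK.
move: g3; rewrite rmorphM /= conjCK => g3.
have hD : P^* - 2 * g^* != 0.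
  have : (P - 2 * g)^* != 0 by rewrite conjC_eq0 subr_eq0 eq_sym g4.
  by rewrite rmorphB rmorphM /= ?rmorph_nat ?rmorph1.
set D := P^* - 2 * g^* in hD.
set N3 := Q * (P^* - g^*) - R.
set N4 := R - g^* * Q.
have e1 : g * g^* - 1 = 0 by rewrite g1 subrr.
have e2 : P^* * g + P * g^* - P * P^* = 0 by rewrite g2 subrr.
have e3 : Q^* * R * g + Q * R^* * g^* - K = 0 by rewrite g3 subrr.
have e4 : P * Q^* * R - K = 0 by rewrite h1 subrr.
have e5 : P^* * Q * R^* - K = 0 by rewrite h2 subrr.
have DD : D * D^* != 0 by rewrite mulf_neq0 ?conjC_eq0.
have unitD : forall N, N * N^* = D * D^* -> (N / D) * (N / D)^* = 1.
  by move=> N HN; rewrite fmorph_div mulf_div HN divff.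
exists g, (P - g), (N3 / D), (N4 / D); split; split.
- exact: g1.
- have -> : (P - g) * (P - g)^* = 1 + ((g * g^* - 1) - (P^* * g + P * g^* - P * P^*)) by rewrite rmorphB /=; ring.
  by rewrite e1 e2 subrr addr0.
- apply: unitD.
  apply/eqP; rewrite -subr_eq0; apply/eqP.
  have -> : N3 * N3^* - D * D^* =
    Q * Q^* * ((g * g^* - 1) - (P^* * g + P * g^* - P * P^*)) - (P * Q^* * R - K) - (P^* * Q * R^* - K) + (Q^* * R * g + Q * R^* * g^* - K) + 2 * (P^* * g + P * g^* - P * P^*) - 4 * (g * g^* - 1).
    by rewrite /N3 /D hKdef ?rmorphB ?rmorphM /= ?conjCK ?rmorph_nat ?rmorph1 ?rmorphB /= ?conjCK; ring.
  by rewrite e1 e2 e3 e4 e5; ring.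
- apply: unitD.
  apply/eqP; rewrite -subr_eq0; apply/eqP.
  have -> : N4 * N4^* - D * D^* = - (Q^* * R * g + Q * R^* * g^* - K) + (Q * Q^* - 4) * (g * g^* - 1) + 2 * (P^* * g + P * g^* - P * P^*).
    by rewrite /N4 /D hKdef !rmorphB !rmorphM /= ?conjCK ?rmorph_nat ?rmorph1; ring.
  by rewrite e1 e2 e3; ring.
- by ring.
- rewrite -mulrDl.
  have -> : N3 + N4 = Q * D by rewrite /N3 /N4 /D; ring.
  by rewrite mulfK.
- have -> : g^* * (N3 / D) + (P - g)^* * (N4 / D) = (R * D) / D.
    rewrite !mulrA -mulrDl; congr (_ / _); rewrite rmorphB /= /N3 /N4 /D; ring.
  by rewrite mulfK.
Qed.



Lemma cs4 (C : numClosedFieldType) (v1 v2 v3 v4 y1 y2 y3 y4 : C) :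
  v1 * v1^* = 1 -> v2 * v2^* = 1 -> v3 * v3^* = 1 -> v4 * v4^* = 1 ->
  y1 * y1^* + y2 * y2^* + y3 * y3^* + y4 * y4^* = 1 ->
  (v1 * y1 + v2 * y2 + v3 * y3 + v4 * y4) * (v1 * y1 + v2 * y2 + v3 * y3 + v4 * y4)^* <= 4.
Proof.
move=> h1 h2 h3 h4 hy.
set z := (v1 * y1 + v2 * y2 + v3 * y3 + v4 * y4).
have L : (v1 * v1^* + v2 * v2^* + v3 * v3^* + v4 * v4^*) *
         (y1 * y1^* + y2 * y2^* + y3 * y3^* + y4 * y4^*) - z * z^* =
   (v1 * y2^* - v2 * y1^*) * (v1 * y2^* - v2 * y1^*)^* +
   (v1 * y3^* - v3 * y1^*) * (v1 * y3^* - v3 * y1^*)^* +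
   (v1 * y4^* - v4 * y1^*) * (v1 * y4^* - v4 * y1^*)^* +
   (v2 * y3^* - v3 * y2^*) * (v2 * y3^* - v3 * y2^*)^* +
   (v2 * y4^* - v4 * y2^*) * (v2 * y4^* - v4 * y2^*)^* +
   (v3 * y4^* - v4 * y3^*) * (v3 * y4^* - v4 * y3^*)^*.
  by rewrite /z !rmorphB !rmorphD !rmorphM /= !conjCK; ring.
rewrite h1 h2 h3 h4 hy in L.
rewrite -subr_ge0 (_ : 4 = (1 + 1 + 1 + 1) * 1); last by ring.
by rewrite L -!normCK !addr_ge0 // exprn_ge0.
Qed.

Lemma qbound (C : numClosedFieldType) (a b c d e f : C) :
  a * a^* = 1 -> b * b^* = 1 -> c * c^* = 1 -> d * d^* = 1 -> e * e^* = 1 -> f * f^* = 1 ->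
  (1 + a + b + e) * (1 + a + b + e)^* = 4 ->
  1 + c * a^* + d * b^* + f * e^* = - ((1 + a + b + e)^* * (1 + c + d + f) / 2) ->
  (1 + c + d + f) * (1 + c + d + f)^* <= 4.
Proof.
move=> ha hb hc hd he hf hp hr.
set p := 1 + a + b + e in hp hr.
have one : (1 : C) * 1^* = 1 by rewrite rmorph1 mulr1.
have := @cs4 C 1 c d f (1/2 - p / 4) (1/2 - p * a^* / 4)
   (1/2 - p * b^* / 4) (1/2 - p * e^* / 4) one hc hd hf.
have -> : 1 * (1 / 2 - p / 4) + c * (1 / 2 - p * a^* / 4) + d * (1 / 2 - p * b^* / 4) +
    f * (1 / 2 - p * e^* / 4) = 1 + c + d + f.
  apply/eqP; rewrite -subr_eq0; apply/eqP.
  have -> : 1 * (1 / 2 - p / 4) + c * (1 / 2 - p * a^* / 4) + d * (1 / 2 - p * b^* / 4) +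
    f * (1 / 2 - p * e^* / 4) - (1 + c + d + f) =
    - (p / 4) * ((1 + c * a^* + d * b^* + f * e^*) + (p^* * (1 + c + d + f) / 2))
    + ((1 + c + d + f) / 8) * (p * p^* - 4) by field.
  by rewrite hr hp addNr subrr !mulr0 addr0.
apply.
apply/eqP; rewrite -subr_eq0; apply/eqP.
have -> : (1 / 2 - p / 4) * (1 / 2 - p / 4)^* + (1 / 2 - p * a^* / 4) * (1 / 2 - p * a^* / 4)^* +
  (1 / 2 - p * b^* / 4) * (1 / 2 - p * b^* / 4)^* + (1 / 2 - p * e^* / 4) * (1 / 2 - p * e^* / 4)^* - 1
  = p * p^* / 16 * ((a * a^* - 1) + (b * b^* - 1) + (e * e^* - 1)).
  by rewrite /p !rmorphB !rmorphM !fmorphV !rmorphD /= ?conjCK ?rmorph1 ?rmorph_nat; field.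
by rewrite ha hb he !subrr !addr0 mulr0.
Qed.



Lemma fwd2 (C : numClosedFieldType) (s1 s2 s3 s4 : C) :
  s1 * s1^* = 1 -> s2 * s2^* = 1 -> s3 * s3^* = 1 -> s4 * s4^* = 1 ->
  (- (s1 + s2)) * (- (s3 + s4))^* * (- (s1^* * s3 + s2^* * s4)) =
  4 - (- (s1 + s2)) * (- (s1 + s2))^* - (- (s3 + s4)) * (- (s3 + s4))^*
    - (- (s1^* * s3 + s2^* * s4)) * (- (s1^* * s3 + s2^* * s4))^*.
Proof.
move=> h1 h2 h3 h4.
have nz : forall x : C, x * x^* = 1 -> x != 0.
  by move=> x H; apply: contra_eq_neq H => ->; rewrite mul0r eq_sym oner_eq0.
have n1 := nz _ h1; have n2 := nz _ h2; have n3 := nz _ h3; have n4 := nz _ h4.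
rewrite !rmorphN !rmorphD !rmorphM /= ?conjCK (conj_unit h1) (conj_unit h2) (conj_unit h3) (conj_unit h4).
field.
by rewrite n1 n2 n3 n4.
Qed.

Lemma conv_cond (C : numClosedFieldType) (p q r : C) :
  p * q^* * r = 4 - p * p^* - q * q^* - r * r^* ->
  (-p) * (-q)^* * (-r) = (-p) * (-p)^* + (-q) * (-q)^* + (-r) * (-r)^* - 4.
Proof.
rewrite !rmorphN /= => H.
transitivity (- (p * q^* * r)); first by ring.
by rewrite H; ring.
Qed.

Arguments core {C P Q R}.
Arguments deg {C P Q R}.
Arguments conv_cond {C p q r}.
Arguments qbound {C a b c d e f}.
Arguments fwd2 {C s1 s2 s3 s4}.
Arguments unitE {C x}.

Theorem theorem2p15 (C : numClosedFieldType) (a b c d e f : C)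
  (ha : `|a| = 1) (hb : `|b| = 1) (hc : `|c| = 1)
  (hd : `|d| = 1) (he : `|e| = 1) (hf : `|f| = 1) :
  (exists s1 s2 s3 s4 : C,
     [/\ `|s1| = 1, `|s2| = 1, `|s3| = 1 & `|s4| = 1] /\
     [/\ cdot (vec6 1 1 1 1 1 1) (vec6 1 a b e s1 s2) = 0,
         cdot (vec6 1 1 1 1 1 1) (vec6 1 c d f s3 s4) = 0 &
         cdot (vec6 1 a b e s1 s2) (vec6 1 c d f s3 s4) = 0])
  <->
  (calH a b c d e f =
     4 - `|1 + a + b + e| ^+ 2 - `|1 + c + d + f| ^+ 2
       - `|1 + c * a^* + d * b^* + f * e^*| ^+ 2
   /\ `|1 + a + b + e| <= 2).
Proof.
have U : forall x : C, `|x| = 1 -> x * x^* = 1 by move=> x /unitE.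
have ua := U a ha; have ub := U b hb; have uc := U c hc.
have ud := U d hd; have ue := U e he; have uf := U f hf.
have hq' : 1 + c^* + d^* + f^* = (1 + c + d + f)^* by rewrite !rmorphD /= rmorph1.
split.
- move=> [s1 [s2 [s3 [s4 [[h1 h2 h3 h4] [o1 o2 o3]]]]]].
  rewrite !cdot6 in o1 o2 o3.
  have hp : 1 + a + b + e = -(s1 + s2).
    move/(congr1 Num.conj_op): o1; rewrite rmorph0 !rmorphD !rmorphM /= !conjCK ?rmorph1 => H.
    by apply/eqP; rewrite -subr_eq0 -H; apply/eqP; ring.
  have hq : 1 + c + d + f = -(s3 + s4).
    move/(congr1 Num.conj_op): o2; rewrite rmorph0 !rmorphD !rmorphM /= !conjCK ?rmorph1 => H.
    by apply/eqP; rewrite -subr_eq0 -H; apply/eqP; ring.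
  have hr : 1 + c * a^* + d * b^* + f * e^* = -(s1^* * s3 + s2^* * s4).
    move/(congr1 Num.conj_op): o3; rewrite rmorph0 !rmorphD !rmorphM /= !conjCK ?rmorph1 => H.
    by apply/eqP; rewrite -subr_eq0 -H; apply/eqP; ring.
  split.
    rewrite /calH !normCK hq' hp hq hr.
    exact: fwd2 (U _ h1) (U _ h2) (U _ h3) (U _ h4).
  by rewrite hp normrN (le_trans (ler_normD _ _)) // h1 h2.
- move=> [hH hp2].
  rewrite /calH !normCK hq' in hH.
  have hc2 := conv_cond hH.
  have hP : (- (1 + a + b + e)) * (- (1 + a + b + e))^* <= 4.
    rewrite -normCK normrN (_ : 4 = 2 ^+ 2); last by ring.
    by rewrite ler_sqr ?nnegrE ?normr_ge0 ?ler0n.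
  have hQ : (- (1 + a + b + e)) * (- (1 + a + b + e))^* = 4 ->
            (- (1 + c + d + f)) * (- (1 + c + d + f))^* <= 4.
    move=> h4; have hR := deg hc2 h4.
    move: h4; rewrite rmorphN mulrNN => h4.
    rewrite rmorphN mulrNN; apply: (@qbound C a b c d e f) => //.
    by move: hR => /(congr1 -%R); rewrite opprK => ->; rewrite rmorphN mulrNN.
  have [s1 [s2 [s3 [s4 [[u1 u2 u3 u4] [e1 e2 e3]]]]]] := core hc2 hP hQ.
  exists s1, s2, s3, s4; split.
    by split; apply/unitE.
  rewrite !cdot6; split.
  + have : (1 + a + b + e) + (s1 + s2) = 0 by rewrite e1 subrr.
    move/(congr1 Num.conj_op); rewrite rmorph0 => <-.
    by rewrite !rmorphD /= rmorph1; ring.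
  + have : (1 + c + d + f) + (s3 + s4) = 0 by rewrite e2 subrr.
    move/(congr1 Num.conj_op); rewrite rmorph0 => <-.
    by rewrite !rmorphD /= rmorph1; ring.
  + have : (1 + c * a^* + d * b^* + f * e^*) + (s1^* * s3 + s2^* * s4) = 0 by rewrite e3 subrr.
    move/(congr1 Num.conj_op); rewrite rmorph0 => <-.
    by rewrite !rmorphD !rmorphM /= ?conjCK rmorph1; ring.
Qed.
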